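(* For $\alpha>0$ let $\mathcal{C}_\alpha=X_\alpha(\mathbb{R}^2)$ be as in the context. Then the curve $\mathcal{C}_\alpha\cap\{x_2=0\}$ converges uniformly to the origin as $\alpha\to+\infty$: $$\sup\{|x_1|+|x_3| : (x_1,0,x_3)\in\mathcal{C}_\alpha\}\to0\quad\text{as }\alpha\to+\infty.$$
   Context: $\mathrm{Nil}_3$ is $\mathbb{R}^3$ with the metric $dx_1^2+dx_2^2+\big(dx_3+\tfrac12(x_2dx_1-x_1dx_2)\big)^2$. For $\alpha>0$ and $\theta\in\mathbb{R}$ set $C_{\alpha,\theta}=\frac{\sin(2\theta)}{2\alpha}$ and $P_{\alpha,\theta}(x)=\alpha^2+\cos(2\theta)x^2-C_{\alpha,\theta}^2x^4$. Let $\theta^+_\alpha=\pi/2$ if $\alpha>1$, and $\theta^+_\alpha=\frac12\arccos(1-2\alpha^2)$ if $\alpha\le1$. Let $$L(\alpha,\theta)=\int_{-1}^1\frac{2\alpha C_{\alpha,\theta}^2x^2-\alpha\cos(2\theta)+C_{\alpha,\theta}^2x^2\sqrt{P_{\alpha,\theta}(x)}}{\sqrt{(1-x^2)P_{\alpha,\theta}(x)}(\alpha+\sqrt{P_{\alpha,\theta}(x)})}dx.$$ Let $\theta=\tilde\theta_\alpha$ be the unique $\theta\in(0,\theta^+_\alpha)\cap(0,\pi/4)$ with $L(\alpha,\theta)=0$, and $C=C_{\alpha,\theta}$. Let $\varphi$ solve $\varphi'^2=P_{\alpha,\theta}(\cos\varphi)$ with $\varphi(0)=0$ and $\varphi'(0)\le0$.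 Define $\beta'=C\cos^2\varphi$ with $\beta(0)=0$, and $G'=\frac{C^2\cos^2\varphi-\cos 2\theta}{\alpha-\varphi'}$ with $G(0)=0$. Put $A=\alpha v+\beta(u)$ and $X_\alpha(u,v)=(x_1,x_2,x_3)$ with $x_1=\frac{G'}{\alpha}\cos\varphi\sinh A-\frac C\alpha\sin\varphi\cosh A$, $x_2=Cv-G$, $x_3=-\frac{x_1x_2}2+\frac C\alpha(\frac{G'}{\alpha}-1)\cos\varphi\cosh A-\frac1\alpha(\frac{C^2}\alpha+G')\sin\varphi\sinh A$, where $\varphi,G,G'$ are evaluated at $u$. *)

(* Defs.v *)
From Stdlib Require Import Reals.
From Coquelicot Require Import Coquelicot.
Open Scope R_scope.

Definition Cc (a t : R) : R := sin (2 * t) / (2 * a).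

Definition Pp (a t x : R) : R :=
  a ^ 2 + cos (2 * t) * x ^ 2 - (Cc a t) ^ 2 * x ^ 4.

Definition thetaPlus (a : R) : R :=
  if Rlt_dec 1 a then PI / 2 else acos (1 - 2 * a ^ 2) / 2.

Definition Lintegrand (a t x : R) : R :=
  (2 * a * (Cc a t) ^ 2 * x ^ 2 - a * cos (2 * t)
     + (Cc a t) ^ 2 * x ^ 2 * sqrt (Pp a t x))
  / (sqrt ((1 - x ^ 2) * Pp a t x) * (a + sqrt (Pp a t x))).

Definition L_vanishes (a t : R) : Prop :=
  is_RInt_gen (Lintegrand a t) (at_right (-1)) (at_left 1) 0.

Definition Gp (a t : R) (phi : R -> R) (u : R) : R :=
  ((Cc a t) ^ 2 * (cos (phi u)) ^ 2 - cos (2 * t)) / (a - Derive phi u).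

Definition Aarg (a : R) (beta : R -> R) (u v : R) : R := a * v + beta u.

Definition X1 (a t : R) (phi beta G : R -> R) (u v : R) : R :=
  Gp a t phi u / a * cos (phi u) * sinh (Aarg a beta u v)
  - Cc a t / a * sin (phi u) * cosh (Aarg a beta u v).

Definition X2 (a t : R) (G : R -> R) (u v : R) : R := Cc a t * v - G u.

Definition X3 (a t : R) (phi beta G : R -> R) (u v : R) : R :=
  - (X1 a t phi beta G u v * X2 a t G u v) / 2
  + Cc a t / a * (Gp a t phi u / a - 1) * cos (phi u) * cosh (Aarg a beta u v)
  - 1 / a * ((Cc a t) ^ 2 / a + Gp a t phi u) * sin (phi u) * sinh (Aarg a beta u v).

(* Main.v *)
Require Import Defs.
From Stdlib Require Import Reals.
From Coquelicot Require Import Coquelicot.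
From Stdlib Require Import Lra Psatz.
Open Scope R_scope.

Lemma deriv_neg_step (f : R -> R) x l : is_derive f x l -> l < 0 ->
  forall d, 0 < d -> exists h, 0 < h < d /\ f (x + h) < f x.
Proof.
  intros H Hl d Hd. apply is_derive_Reals in H.
  destruct (H (- l / 2)) as [del Hdel]; [lra|].
  set (h := Rmin d del / 2).
  assert (Hm1 : Rmin d del <= d) by apply Rmin_l.
  assert (Hm2 : Rmin d del <= del) by apply Rmin_r.
  assert (Hp : 0 < Rmin d del) by (apply Rmin_pos; [lra| apply cond_pos]).
  exists h. split. unfold h; lra.
  assert (Hh : h <> 0) by (unfold h; lra).
  assert (Ha : Rabs h < del) by (rewrite Rabs_pos_eq; unfold h; lra).
  specialize (Hdel h Hh Ha).
  apply Rabs_lt_between in Hdel. destruct Hdel as [_ Hdel].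
  assert (Hq : (f (x + h) - f x) / h < 0) by lra.
  assert (0 < h) by (unfold h; lra).
  assert (f (x+h) - f x < 0).
  { replace (f (x+h) - f x) with ((f (x + h) - f x) / h * h) by (field; lra).
    nra. }
  lra.
Qed.

Lemma deriv_pos_step (f : R -> R) x l : is_derive f x l -> 0 < l ->
  forall d, 0 < d -> exists h, 0 < h < d /\ f (x - h) < f x.
Proof.
  intros H Hl d Hd. apply is_derive_Reals in H.
  destruct (H (l / 2)) as [del Hdel]; [lra|].
  set (h := Rmin d del / 2).
  assert (Hm1 : Rmin d del <= d) by apply Rmin_l.
  assert (Hm2 : Rmin d del <= del) by apply Rmin_r.
  assert (Hp : 0 < Rmin d del) by (apply Rmin_pos; [lra| apply cond_pos]).
  exists h. split. unfold h; lra.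
  assert (Hh : -h <> 0) by (unfold h; lra).
  assert (Ha : Rabs (-h) < del) by (rewrite Rabs_Ropp, Rabs_pos_eq; unfold h; lra).
  specialize (Hdel (-h) Hh Ha).
  apply Rabs_lt_between in Hdel. destruct Hdel as [Hdel _].
  assert (Hq : 0 < (f (x + - h) - f x) / - h) by lra.
  assert (0 < h) by (unfold h; lra).
  assert (f (x + - h) - f x < 0).
  { replace (f (x + - h) - f x) with (- ((f (x + - h) - f x) / - h * h)) by (field; lra).
    nra. }
  replace (x - h) with (x + - h) by ring. lra.
Qed.

Lemma darboux_sign (f d : R -> R) :
  (forall x, is_derive f x (d x)) -> (forall x, d x <> 0) ->
  forall x1 w, x1 < w -> d x1 < 0 -> d w < 0.
Proof.
  intros Hf Hd x1 w Hxw H1.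
  destruct (Rlt_or_le (d w) 0) as [Hw|Hw]; [exact Hw|].
  assert (Hw' : 0 < d w) by (destruct Hw; [lra| exfalso; apply (Hd w); auto]).
  destruct (continuity_ab_min f x1 w) as [mx [Hmin Hmx]]; [lra| |].
  { intros c _. apply continuity_pt_filterlim.
    apply (ex_derive_continuous f). exists (d c). apply Hf. }
  destruct (deriv_neg_step f x1 (d x1) (Hf x1) H1 (w - x1)) as [h [Hh Hfh]]; [lra|].
  destruct (deriv_pos_step f w (d w) (Hf w) Hw' (w - x1)) as [h' [Hh' Hfh']]; [lra|].
  assert (E1 := Hmin (x1 + h) ltac:(lra)).
  assert (E2 := Hmin (w - h') ltac:(lra)).
  assert (x1 < mx).
  { destruct Hmx as [[Hlt|Heq] _]; [exact Hlt| subst; lra]. }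
  assert (mx < w).
  { destruct Hmx as [_ [Hlt|Heq]]; [exact Hlt| subst; lra]. }
  exfalso.
  destruct (Rlt_or_le (d mx) 0) as [Hn|Hn].
  - destruct (deriv_neg_step f mx (d mx) (Hf mx) Hn (w - mx)) as [k [Hk Hfk]]; [lra|].
    assert (Ht := Hmin (mx + k) ltac:(lra)). lra.
  - assert (Hp : 0 < d mx) by (destruct Hn; [lra| exfalso; apply (Hd mx); auto]).
    destruct (deriv_pos_step f mx (d mx) (Hf mx) Hp (mx - x1)) as [k [Hk Hfk]]; [lra|].
    assert (Ht := Hmin (mx - k) ltac:(lra)). lra.
Qed.

Lemma deriv_always_neg (f d : R -> R) :
  (forall x, is_derive f x (d x)) -> (forall x, d x <> 0) -> d 0 < 0 ->
  forall u, d u < 0.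
Proof.
  intros Hf Hd H0 u.
  destruct (Rtotal_order u 0) as [Hu|[Hu|Hu]].
  - destruct (Rlt_or_le (d u) 0) as [Hn|Hn]; [exact Hn|exfalso].
    assert (Hp : 0 < d u) by (destruct Hn; [lra| exfalso; apply (Hd u); auto]).
    assert (Hf' : forall x, is_derive (fun y => - f y) x (- d x)).
    { intros x. apply (is_derive_opp f x (d x)), Hf. }
    assert (Hd' : forall x, - d x <> 0) by (intros x Hx; apply (Hd x); lra).
    assert (H := darboux_sign _ _ Hf' Hd' u 0 Hu ltac:(lra)). lra.
  - subst; auto.
  - exact (darboux_sign f d Hf Hd 0 u Hu H0).
Qed.


Lemma const_of_zero_deriv (f : R -> R) :
  (forall x, is_derive f x 0) -> forall x, f x = f 0.
Proof.
  intros Hf x.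
  destruct (MVT_gen f 0 x (fun _ => 0)) as [c [_ Hc]].
  - intros y _. apply Hf.
  - intros y _. apply continuity_pt_filterlim, (ex_derive_continuous f).
    exists 0. apply Hf.
  - lra.
Qed.

Lemma periodic_bound (K : R -> R) B :
  (forall y, K (y + PI) = K y) ->
  (forall y, 0 <= y <= PI -> Rabs (K y) <= B) ->
  forall y, Rabs (K y) <= B.
Proof.
  intros Hper Hb.
  assert (HP := PI_RGT_0).
  assert (Hn : forall n : nat, forall y, - INR n * PI <= y <= (INR n + 1) * PI -> Rabs (K y) <= B).
  { induction n as [|n IH]; intros y Hy.
    - simpl in Hy. apply Hb. lra.
    - rewrite S_INR in Hy. assert (0 <= INR n) by apply pos_INR.
      destruct (Rlt_or_le ((INR n + 1) * PI) y) as [H1|H1].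
      + replace y with ((y - PI) + PI) by ring. rewrite Hper. apply IH. nra.
      + destruct (Rlt_or_le y (- INR n * PI)) as [H2|H2].
        * rewrite <- Hper. apply IH. nra.
        * apply IH. lra. }
  intros y.
  destruct (INR_archimed PI (Rabs y) HP) as [n Hn'].
  apply (Hn n).
  assert (H1 : - y <= Rabs y) by (rewrite <- Rabs_Ropp; apply Rle_abs).
  assert (H2 : y <= Rabs y) by apply Rle_abs.
  split; nra.
Qed.

Lemma RInt_deriv (k : R -> R) : (forall y, continuous k y) ->
  forall y, is_derive (fun z => RInt k 0 z) y (k y).
Proof.
  intros Hk y.
  assert (Hc : forall b, is_RInt k 0 b (RInt k 0 b)).
  { intros b. apply (RInt_correct k 0 b). apply (ex_RInt_continuous k). intros; apply Hk. }
  apply (is_derive_RInt k (fun z => RInt k 0 z) 0 y).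
  - exists (mkposreal 1 Rlt_0_1). intros b _. apply Hc.
  - apply Hk.
Qed.

Lemma RInt_periodic (k : R -> R) : (forall y, continuous k y) ->
  (forall y, k (y + PI) = k y) -> RInt k 0 PI = 0 ->
  forall y, RInt k 0 (y + PI) = RInt k 0 y.
Proof.
  intros Hk Hper H0.
  assert (HD := RInt_deriv k Hk).
  assert (Hd : forall x, is_derive (fun y => RInt k 0 (y + PI) - RInt k 0 y) x 0).
  { intros x.
    assert (H1 : is_derive (fun y => RInt k 0 (y + PI)) x (k (x + PI))).
    { assert (Hg : is_derive (fun y : R => y + PI) x 1).
      { auto_derive; auto. }
      assert (H := is_derive_comp (fun z => RInt k 0 z) (fun y => y + PI) x _ _ (HD (x + PI)) Hg).
      simpl in H. unfold scal in H; simpl in H; unfold mult in H; simpl in H.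
      rewrite Rmult_1_l in H. exact H. }
    assert (H2 := is_derive_minus _ _ x _ _ H1 (HD x)).
    simpl in H2. unfold minus, plus, opp in H2; simpl in H2.
    rewrite Hper, Rplus_opp_r in H2. exact H2. }
  intros y. assert (E := const_of_zero_deriv _ Hd y). simpl in E.
  rewrite Rplus_0_l, H0, RInt_point in E. unfold zero in E; simpl in E. lra.
Qed.


Definition Nn a t x := 2*a*(Cc a t)^2*x^2 - a*cos(2*t) + (Cc a t)^2*x^2*sqrt(Pp a t x).
Definition k0 a t y := Nn a t (cos y) / ((a + sqrt (Pp a t (cos y))) * sqrt (Pp a t (cos y))).

Lemma Pp_neg a t x : Pp a t (-x) = Pp a t x.
Proof. unfold Pp. ring. Qed.
Lemma Nn_neg a t x : Nn a t (-x) = Nn a t x.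
Proof. unfold Nn. rewrite Pp_neg. ring. Qed.
Lemma k0_shift a t y : k0 a t (y + PI) = k0 a t y.
Proof. unfold k0. rewrite neg_cos, Pp_neg, Nn_neg. reflexivity. Qed.

Lemma Cc_bound a t : 0 < a -> (Cc a t)^2 <= 1 / (4 * a^2).
Proof.
  intros Ha. unfold Cc.
  assert (Hs := SIN_bound (2*t)).
  replace ((sin (2 * t) / (2 * a)) ^ 2) with (sin (2*t) ^ 2 / (4 * a^2)) by (field; lra).
  apply Rmult_le_compat_r. apply Rlt_le, Rinv_0_lt_compat; nra. nra.
Qed.

Lemma P_bounds a t x : 2 <= a -> -1 <= x <= 1 ->
  (a - 1)^2 <= Pp a t x <= (a + 1)^2.
Proof.
  intros Ha Hx. unfold Pp.
  assert (HC := Cc_bound a t ltac:(lra)).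
  assert (Hc := COS_bound (2*t)).
  assert (H4 : 1 / (4 * a^2) <= 1/16).
  { apply Rmult_le_compat_l; [lra|]. apply Rinv_le_contravar; nra. }
  set (C2 := Cc a t ^ 2) in *.
  assert (HC0 : 0 <= C2) by (unfold C2; nra).
  assert (Hy : 0 <= x^2 <= 1) by nra.
  replace (x^4) with ((x^2)^2) by ring.
  set (y := x^2) in *. set (c := cos (2*t)) in *.
  assert (0 <= C2 * y^2 <= 1/16) by (split; nra).
  assert (-1 <= c * y <= 1) by (split; nra).
  split; nra.
Qed.

Lemma sqrtP_bounds a t x : 2 <= a -> -1 <= x <= 1 ->
  a - 1 <= sqrt (Pp a t x) <= a + 1.
Proof.
  intros Ha Hx. destruct (P_bounds a t x Ha Hx) as [H1 H2].
  split.
  - rewrite <- (sqrt_pow2 (a-1)) by lra. apply sqrt_le_1_alt; lra.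
  - rewrite <- (sqrt_pow2 (a+1)) by lra. apply sqrt_le_1_alt; lra.
Qed.

Lemma k0_ex_derive a t y : 2 <= a -> ex_derive (k0 a t) y.
Proof.
  intros Ha.
  assert (Hb := sqrtP_bounds a t (cos y) Ha (COS_bound y)).
  assert (Hp := P_bounds a t (cos y) Ha (COS_bound y)).
  assert (HPd : ex_derive (fun x => Pp a t x) (cos y)) by (unfold Pp; auto_derive; auto).
  assert (Hpos : 0 < Pp a t (cos y)) by nra.
  assert (Hs : 0 < sqrt (Pp a t (cos y))) by lra.
  unfold k0, Nn. auto_derive. repeat split; auto.
  apply Rmult_integral_contrapositive_currified; lra.
Qed.

Lemma Lint_cont a t z : 2 <= a -> -1 < z < 1 -> continuous (Lintegrand a t) z.
Proof.
  intros Ha Hz. apply (ex_derive_continuous (Lintegrand a t)).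
  assert (Hb := sqrtP_bounds a t z Ha ltac:(lra)).
  assert (Hp := P_bounds a t z Ha ltac:(lra)).
  assert (HPd : ex_derive (fun x => Pp a t x) z) by (unfold Pp; auto_derive; auto).
  assert (Hpos : 0 < Pp a t z) by nra.
  assert (Hs : 0 < sqrt (Pp a t z)) by lra.
  assert (Hq : 0 < (1 - z^2) * Pp a t z) by (apply Rmult_lt_0_compat; nra).
  assert (Hsq := sqrt_lt_R0 _ Hq).
  unfold Lintegrand. auto_derive.
  replace (1 + - (z * (z * 1))) with (1 - z ^ 2) by ring.
  repeat split; auto. apply Rmult_integral_contrapositive_currified; lra.
Qed.

Lemma Lint_cos a t y : 2 <= a -> 0 < y < PI ->
  Lintegrand a t (cos y) * sin y = k0 a t y.
Proof.
  intros Ha Hy.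
  assert (Hsin : 0 < sin y) by (apply sin_gt_0; lra).
  assert (Hb := sqrtP_bounds a t (cos y) Ha (COS_bound y)).
  assert (E : 1 - cos y ^ 2 = sin y ^ 2).
  { assert (H := sin2 y). unfold Rsqr in H. simpl. lra. }
  unfold Lintegrand, k0. rewrite E, sqrt_mult_alt by nra.
  rewrite sqrt_pow2 by lra.
  unfold Nn. field. repeat split; lra.
Qed.

Lemma cos_lt1 y : 0 < y < PI -> -1 < cos y < 1.
Proof.
  intros Hy. split.
  - rewrite <- cos_PI. apply cos_decreasing_1; lra.
  - rewrite <- cos_0. apply cos_decreasing_1; lra.
Qed.

Lemma change_var a t e : 2 <= a -> 0 < e < PI / 2 ->
  RInt (k0 a t) e (PI - e) = RInt (Lintegrand a t) (cos (PI - e)) (cos e).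
Proof.
  intros Ha He.
  assert (HP := PI_RGT_0).
  assert (Hmin : Rmin e (PI - e) = e) by (apply Rmin_left; lra).
  assert (Hmax : Rmax e (PI - e) = PI - e) by (apply Rmax_right; lra).
  assert (HI := is_RInt_comp (Lintegrand a t) cos (fun y => - sin y) e (PI - e)).
  rewrite Hmin, Hmax in HI.
  assert (HI' : is_RInt (fun y : R => scal (- sin y) (Lintegrand a t (cos y))) e (PI - e)
            (RInt (Lintegrand a t) (cos e) (cos (PI - e)))).
  { apply HI.
    - intros x Hx. apply Lint_cont; auto. apply cos_lt1; lra.
    - intros x Hx. split.
      + auto_derive; auto. ring.
      + apply (ex_derive_continuous (fun y => - sin y)). auto_derive; auto. }
  clear HI.
  assert (Hex : ex_RInt (Lintegrand a t) (cos (PI - e)) (cos e)).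
  { apply (ex_RInt_continuous (Lintegrand a t)). intros z Hz.
    apply Lint_cont; auto.
    assert (H1 := cos_lt1 e ltac:(lra)). assert (H2 := cos_lt1 (PI - e) ltac:(lra)).
    unfold Rmin, Rmax in Hz; destruct Rle_dec in Hz; lra. }
  rewrite <- (opp_RInt_swap _ _ _ (ex_RInt_swap _ _ _ Hex)).
  rewrite <- (is_RInt_unique _ _ _ _ HI').
  rewrite <- (RInt_opp (fun y : R => scal (- sin y) (Lintegrand a t (cos y)))) by (eexists; exact HI').
  apply RInt_ext. rewrite Hmin, Hmax. intros x Hx.
  rewrite <- (Lint_cos a t x Ha ltac:(lra)).
  unfold opp, scal; simpl. unfold mult; simpl. ring.
Qed.



Lemma cos_to_left : filterlim cos (at_right 0) (at_left 1).
Proof.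
  intros P [d Hd].
  assert (Hc : continuity_pt cos 0) by apply continuity_cos.
  destruct (proj1 (continuity_pt_locally cos 0) Hc d) as [d' Hd'].
  assert (HP := PI_RGT_0).
  assert (Hm : 0 < Rmin d' PI) by (apply Rmin_pos; [apply cond_pos| lra]).
  exists (mkposreal _ Hm). intros e He Hpos. simpl in He.
  unfold ball in He; simpl in He; unfold AbsRing_ball, abs, minus, plus, opp in He; simpl in He.
  apply Hd.
  - assert (Rmin d' PI <= d') by apply Rmin_l.
    assert (Hce : Rabs (cos e - cos 0) < d).
    { apply Hd'. unfold ball; simpl; unfold AbsRing_ball, abs, minus, plus, opp; simpl. lra. }
    rewrite cos_0 in Hce. exact Hce.
  - assert (Rmin d' PI <= PI) by apply Rmin_r.
    rewrite Rabs_right in He by lra.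
    rewrite <- cos_0. apply cos_decreasing_1; lra.
Qed.

Lemma cosPI_to_right : filterlim (fun e => cos (PI - e)) (at_right 0) (at_right (-1)).
Proof.
  intros P [d Hd].
  assert (Hc : continuity_pt cos 0) by apply continuity_cos.
  destruct (proj1 (continuity_pt_locally cos 0) Hc d) as [d' Hd'].
  assert (HP := PI_RGT_0).
  assert (Hm : 0 < Rmin d' PI) by (apply Rmin_pos; [apply cond_pos| lra]).
  exists (mkposreal _ Hm). intros e He Hpos. simpl in He.
  unfold ball in He; simpl in He; unfold AbsRing_ball, abs, minus, plus, opp in He; simpl in He.
  assert (Ec : cos (PI - e) = - cos e) by (rewrite cos_minus, cos_PI, sin_PI; ring).
  rewrite Ec.
  apply Hd.
  - assert (Rmin d' PI <= d') by apply Rmin_l.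
    assert (Hce : Rabs (cos e - cos 0) < d).
    { apply Hd'. unfold ball; simpl; unfold AbsRing_ball, abs, minus, plus, opp; simpl. lra. }
    rewrite cos_0 in Hce. change (Rabs (- cos e - -1) < d).
    replace (- cos e - -1) with (- (cos e - 1)) by ring. rewrite Rabs_Ropp. exact Hce.
  - assert (Rmin d' PI <= PI) by apply Rmin_r.
    rewrite Rabs_right in He by lra.
    assert (cos e < 1) by (rewrite <- cos_0; apply cos_decreasing_1; lra). lra.
Qed.

Lemma k0_cont a t : 2 <= a -> forall y, continuous (k0 a t) y.
Proof. intros Ha y. apply (ex_derive_continuous (k0 a t)), k0_ex_derive; auto. Qed.

Lemma L_to_K a t : 2 <= a -> L_vanishes a t -> RInt (k0 a t) 0 PI = 0.
Proof.
  intros Ha HL.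
  assert (HP := PI_RGT_0).
  assert (Hkc := k0_cont a t Ha).
  assert (HD := RInt_deriv _ Hkc).
  set (K := fun z => RInt (k0 a t) 0 z) in *.
  assert (HKc : forall x, continuity_pt K x).
  { intros x. apply continuity_pt_filterlim, (ex_derive_continuous K). eexists; apply HD. }
  assert (Hex : forall u v, ex_RInt (k0 a t) u v).
  { intros u v. apply (ex_RInt_continuous (k0 a t)). intros; apply Hkc. }
  destruct (Req_dec (K PI) 0) as [H0|H0]; [exact H0|exfalso].
  assert (Hpos : 0 < Rabs (K PI) / 4) by (assert (Rabs (K PI) > 0) by (apply Rabs_pos_lt; auto); lra).
  set (eta := mkposreal _ Hpos).
  unfold L_vanishes, is_RInt_gen, filterlimi, filter_le, filtermapi in HL.
  specialize (HL (ball 0 eta) (locally_ball _ _)).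
  assert (E1 := filterlim_pair _ _ cosPI_to_right cos_to_left _ HL).
  unfold filtermap in E1. simpl in E1.
  assert (E2 : at_right 0 (fun e => Rabs (K (PI - e) - K PI) < eta)).
  { destruct (proj1 (continuity_pt_locally K PI) (HKc PI) eta) as [d Hd].
    exists d. intros e He _. apply Hd.
    unfold ball in He |- *; simpl in He |- *;
    unfold AbsRing_ball, abs, minus, plus, opp in He |- *; simpl in He |- *.
    replace (PI - e + - PI) with (- (e + - 0)) by ring. rewrite Rabs_Ropp. exact He. }
  assert (E3 : at_right 0 (fun e => Rabs (K e - K 0) < eta)).
  { destruct (proj1 (continuity_pt_locally K 0) (HKc 0) eta) as [d Hd].
    exists d. intros e He _. apply Hd. exact He. }
  assert (Hp2 : 0 < PI / 2) by lra.
  assert (E4 : at_right 0 (fun e => 0 < e < PI / 2)).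
  { exists (mkposreal _ Hp2). intros e He Hp.
    unfold ball in He; simpl in He; unfold AbsRing_ball, abs, minus, plus, opp in He; simpl in He.
    rewrite Rabs_right in He by lra. lra. }
  destruct (filter_ex (F := at_right 0) _
     (filter_and _ _ (filter_and _ _ (filter_and _ _ E1 E2) E3) E4))
    as [e [[[[y [Hy Hyb]] H2] H3] H4]].
  assert (Hch := RInt_Chasles (k0 a t) 0 e (PI - e) (Hex _ _) (Hex _ _)).
  unfold plus in Hch; simpl in Hch.
  rewrite (change_var a t e Ha H4), (is_RInt_unique _ _ _ _ Hy) in Hch.
  assert (HK0 : K 0 = 0) by (unfold K; rewrite RInt_point; reflexivity).
  fold (K e) (K (PI - e)) in Hch.
  unfold ball in Hyb; simpl in Hyb; unfold AbsRing_ball, abs, minus, plus, opp in Hyb; simpl in Hyb.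
  simpl in H2, H3. rewrite HK0 in H3.
  apply Rabs_lt_between in Hyb. apply Rabs_lt_between in H2. apply Rabs_lt_between in H3.
  destruct (Rcase_abs (K PI)) as [Hs|Hs].
  - rewrite (Rabs_left _ Hs) in *. simpl in *. lra.
  - rewrite (Rabs_right _ Hs) in *. simpl in *. lra.
Qed.


Lemma abs_prod_le x y X Y : Rabs x <= X -> Rabs y <= Y -> Rabs (x * y) <= X * Y.
Proof.
  intros H1 H2. rewrite Rabs_mult.
  apply Rmult_le_compat; auto; apply Rabs_pos.
Qed.

Lemma abs_minus_le x y : Rabs (x - y) <= Rabs x + Rabs y.
Proof.
  unfold Rminus. eapply Rle_trans; [apply Rabs_triang|]. rewrite Rabs_Ropp. lra.
Qed.

Lemma cosh_sinh_bound A : Rabs A <= 1 -> Rabs (cosh A) <= 3 /\ Rabs (sinh A) <= 3.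
Proof.
  intros H. apply Rabs_le_between in H.
  assert (E1 : exp A <= 3).
  { eapply Rle_trans; [|apply exp_le_3]. apply exp_le_3 || idtac.
    destruct (Req_dec A 1) as [->|Hn]; [lra|]. left; apply exp_increasing; lra. }
  assert (E2 : exp (- A) <= 3).
  { eapply Rle_trans; [|apply exp_le_3].
    destruct (Req_dec (-A) 1) as [->|Hn]; [lra|]. left; apply exp_increasing; lra. }
  assert (P1 := exp_pos A). assert (P2 := exp_pos (-A)).
  unfold cosh, sinh. split; apply Rabs_le_between; split; lra.
Qed.


Theorem lemma6p2 (theta : R -> R) (phi beta G : R -> R -> R) :
  (forall a, 0 < a ->
     0 < theta a /\ theta a < thetaPlus a /\ theta a < PI / 4 /\
     L_vanishes a (theta a)) ->
  (forall a, 0 < a ->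
     phi a 0 = 0 /\ Derive (phi a) 0 <= 0 /\
     forall u, ex_derive (phi a) u /\
               (Derive (phi a) u) ^ 2 = Pp a (theta a) (cos (phi a u))) ->
  (forall a, 0 < a ->
     beta a 0 = 0 /\
     forall u, is_derive (beta a) u (Cc a (theta a) * (cos (phi a u)) ^ 2)) ->
  (forall a, 0 < a ->
     G a 0 = 0 /\
     forall u, is_derive (G a) u (Gp a (theta a) (phi a) u)) ->
  forall eps, 0 < eps -> exists M, forall a, M < a ->
    forall u v, X2 a (theta a) (G a) u v = 0 ->
      Rabs (X1 a (theta a) (phi a) (beta a) (G a) u v)
      + Rabs (X3 a (theta a) (phi a) (beta a) (G a) u v) <= eps.
Proof.
  intros Hth Hphi Hbeta HG eps Heps.
  exists (Rmax 8 (14 / eps)). intros a Ha u v Hx2.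
  assert (Ha8 : 8 < a) by (eapply Rle_lt_trans; [apply Rmax_l| exact Ha]).
  assert (Hae : 14 / eps < a) by (eapply Rle_lt_trans; [apply Rmax_r| exact Ha]).
  assert (Ha0 : 0 < a) by lra. assert (Ha2 : 2 <= a) by lra.
  destruct (Hth a Ha0) as [Ht0 [_ [Ht1 HL]]].
  destruct (Hphi a Ha0) as [Hp0 [Hd0 Hpd]].
  destruct (Hbeta a Ha0) as [Hb0 Hbd].
  destruct (HG a Ha0) as [HG0 HGd].
  set (t := theta a) in *.
  set (p := phi a) in *.
  assert (HK := L_to_K a t Ha2 HL).
  assert (HP := PI_RGT_0). assert (HP4 := PI_4).
  set (C := Cc a t) in *.
  assert (Hs2 : 0 < sin (2 * t)) by (apply sin_gt_0; lra).
  assert (Hc2 : 0 < cos (2 * t)) by (apply cos_gt_0; lra).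
  assert (HC0 : 0 < C) by (unfold C, Cc; apply Rdiv_lt_0_compat; lra).
  assert (HC2 := Cc_bound a t Ha0). fold C in HC2.
  assert (HCa : 4 * a^2 * C^2 <= 1).
  { apply (Rmult_le_compat_l (4 * a^2)) in HC2; [|nra].
    replace (4 * a ^ 2 * (1 / (4 * a ^ 2))) with 1 in HC2 by (field; lra). lra. }
  assert (Hdsgn : forall u, Derive p u = - sqrt (Pp a t (cos (p u)))).
  { assert (Hdc : forall x, is_derive p x (Derive p x)).
    { intros x. apply Derive_correct, Hpd. }
    assert (Hsq : forall x, (a - 1)^2 <= (Derive p x)^2).
    { intros x. rewrite (proj2 (Hpd x)). apply P_bounds; auto. apply COS_bound. }
    assert (Hnz : forall x, Derive p x <> 0).
    { intros x Hx. assert (H := Hsq x). rewrite Hx in H. nra. }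
    assert (Hneg : Derive p 0 < 0) by (destruct Hd0; [lra| exfalso; apply (Hnz 0); auto]).
    intros x. assert (Hx := deriv_always_neg p (Derive p) Hdc Hnz Hneg x).
    rewrite <- (proj2 (Hpd x)).
    replace (Derive p x ^ 2) with ((- Derive p x) ^ 2) by ring.
    rewrite sqrt_pow2 by lra. ring. }
  assert (Hkc := k0_cont a t Ha2).
  assert (Hex : forall u v, ex_RInt (k0 a t) u v).
  { intros u0 v0. apply (ex_RInt_continuous (k0 a t)). intros; apply Hkc. }
  assert (Hc2s : a^2 * cos (2 * t) <= 1).
  { destruct (continuity_ab_min (fun y => - k0 a t y) 0 PI) as [mx [Hmx Hmxr]]; [lra| |].
    { intros c _. apply continuity_pt_filterlim.
      apply (continuous_opp (k0 a t)). apply Hkc. }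
    assert (Hk0 : 0 <= k0 a t mx).
    { destruct (Rlt_or_le (k0 a t mx) 0) as [Hn|Hn]; [exfalso|exact Hn].
      assert (Hle : RInt (k0 a t) 0 PI <= RInt (fun _ => k0 a t mx) 0 PI).
      { apply RInt_le; [lra| apply Hex| apply ex_RInt_const|].
        intros x Hx. assert (H := Hmx x ltac:(lra)). lra. }
      rewrite RInt_const in Hle. unfold scal in Hle; simpl in Hle; unfold mult in Hle; simpl in Hle.
      rewrite HK in Hle. nra. }
    set (x := cos mx) in *.
    assert (Hx := COS_bound mx). fold x in Hx.
    assert (Hb := sqrtP_bounds a t x Ha2 Hx).
    assert (Hden : 0 < (a + sqrt (Pp a t x)) * sqrt (Pp a t x)) by (apply Rmult_lt_0_compat; lra).
    assert (HN : 0 <= Nn a t x).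
    { unfold k0 in Hk0. fold x in Hk0.
      replace (Nn a t x) with (Nn a t x / ((a + sqrt (Pp a t x)) * sqrt (Pp a t x)) *
                 ((a + sqrt (Pp a t x)) * sqrt (Pp a t x))) by (field; lra).
      apply Rmult_le_pos; lra. }
    unfold Nn in HN. fold C in HN.
    set (S := sqrt (Pp a t x)) in *.
    assert (HX : 0 <= x^2 <= 1) by (split; nra).
    assert (H1 : a * cos (2*t) <= C^2 * x^2 * (2*a + S)) by nra.
    assert (H2 : C^2 * x^2 * (2*a + S) <= C^2 * (4 * a)).
    { replace (C^2 * x^2 * (2*a + S)) with (C^2 * (x^2 * (2*a + S))) by ring.
      apply Rmult_le_compat_l; [nra|]. nra. }
    assert (H3 : a * (a * cos (2 * t)) <= a * (C^2 * (4 * a))) by (apply Rmult_le_compat_l; lra).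
    nra. }
  assert (Hs2b : 1/2 <= sin (2*t)).
  { assert (H := sin2_cos2 (2*t)). unfold Rsqr in H.
    assert (64 <= a^2) by nra. assert (cos (2*t) <= 1/64) by nra. nra. }
  assert (HCl : 1 <= 4 * a * C).
  { unfold C, Cc. replace (4 * a * (sin (2 * t) / (2 * a))) with (2 * sin (2*t)) by (field; lra). lra. }
  assert (HCu : C <= 1 / (2 * a)).
  { unfold C, Cc. unfold Rdiv. apply Rmult_le_compat_r. left; apply Rinv_0_lt_compat; lra.
    assert (H := SIN_bound (2*t)). lra. }
  assert (Hkb : forall y, Rabs (k0 a t y) <= 4 / a^3).
  { intros y. unfold k0.
    set (x := cos y). assert (Hx := COS_bound y). fold x in Hx.
    assert (Hb := sqrtP_bounds a t x Ha2 Hx).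
    set (S := sqrt (Pp a t x)) in *.
    assert (HX : 0 <= x^2 <= 1) by (split; nra).
    assert (HNb : Rabs (Nn a t x) <= 2 / a).
    { unfold Nn. fold C S.
      assert (H2 : C^2 * x^2 * (2*a + S) <= C^2 * (4 * a)).
      { replace (C^2 * x^2 * (2*a + S)) with (C^2 * (x^2 * (2*a + S))) by ring.
        apply Rmult_le_compat_l; [nra|]. nra. }
      assert (H3 : 0 <= C^2 * x^2 * (2*a + S)) by (apply Rmult_le_pos; nra).
      assert (H4 : a * (C ^ 2 * (4 * a)) <= 1) by nra.
      assert (H5 : a * (a * cos (2 * t)) <= 1) by nra.
      assert (Hia : 0 < / a) by (apply Rinv_0_lt_compat; lra).
      assert (H6 : C ^ 2 * (4 * a) <= / a).
      { apply (Rmult_le_reg_l a); [lra|]. rewrite Rinv_r by lra. lra. }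
      assert (H7 : a * cos (2 * t) <= / a).
      { apply (Rmult_le_reg_l a); [lra|]. rewrite Rinv_r by lra. lra. }
      replace (2 / a) with (/a + /a) by (field; lra).
      apply Rabs_le_between. split; nra. }
    assert (Hden : a^2 / 2 <= (a + S) * S) by nra.
    unfold Rdiv. rewrite Rabs_mult, Rabs_inv.
    rewrite (Rabs_right ((a + S) * S)) by nra.
    replace (4 * / a^3) with ((2 / a) * / (a^2 / 2)) by (field; lra).
    apply Rmult_le_compat; [apply Rabs_pos| left; apply Rinv_0_lt_compat; nra| exact HNb|].
    apply Rinv_le_contravar; nra. }
  set (K := fun z => RInt (k0 a t) 0 z).
  assert (HKb : forall y, Rabs (K y) <= PI * (4 / a^3)).
  { apply periodic_bound.
    - intros y. apply RInt_periodic; auto. apply k0_shift.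
    - intros y Hy. unfold K.
      eapply Rle_trans; [apply abs_RInt_le_const; [lra| apply Hex| intros; apply Hkb]|].
      apply Rmult_le_compat_r; [|lra]. unfold Rdiv. apply Rmult_le_pos; [lra|].
      left; apply Rinv_0_lt_compat; nra. }
  assert (HD := RInt_deriv _ Hkc). fold K in HD.
  assert (HF : forall u, a / C * G a u + beta a u + / C * K (p u) = 0).
  { assert (Hd : forall x, is_derive (fun u => a / C * G a u + beta a u + / C * K (p u)) x 0).
    { intros x.
      assert (E1 := is_derive_scal (G a) x (a / C) _ (HGd x)).
      assert (E2 := is_derive_comp K p x _ _ (HD (p x)) (Derive_correct _ _ (proj1 (Hpd x)))).
      assert (E3 := is_derive_scal _ x (/ C) _ E2).
      assert (E4 := is_derive_plus _ _ x _ _ E1 (Hbd x)).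
      assert (E5 := is_derive_plus _ _ x _ _ E4 E3).
      simpl in E5. unfold scal, plus in E5; simpl in E5; unfold mult in E5; simpl in E5.
      replace 0 with (a / C * Gp a t p x + C * cos (p x) ^ 2 + / C * (Derive p x * k0 a t (p x))).
      exact E5.
      rewrite Hdsgn. unfold Gp, k0, Nn. rewrite Hdsgn. fold C.
      assert (Hb := sqrtP_bounds a t (cos (p x)) Ha2 (COS_bound _)).
      field. repeat split; lra. }
    intros u0. rewrite (const_of_zero_deriv _ Hd u0).
    rewrite HG0, Hb0, Hp0. unfold K. rewrite RInt_point. unfold zero; simpl. ring. }
  assert (Hia : 0 < / a) by (apply Rinv_0_lt_compat; lra).
  assert (Hia8 : / a <= 1 / 8).
  { unfold Rdiv. rewrite Rmult_1_l. apply Rinv_le_contravar; lra. }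
  assert (HiC : / C <= 4 * a).
  { apply (Rmult_le_reg_l C); [lra|]. rewrite Rinv_r by lra. lra. }
  assert (HA : Rabs (Aarg a (beta a) u v) <= 1).
  { unfold X2 in Hx2. fold t C in Hx2.
    assert (Ev : v = G a u / C).
    { apply (Rmult_eq_reg_l C); [|lra]. replace (C * (G a u / C)) with (G a u) by (field; lra). lra. }
    assert (EA : Aarg a (beta a) u v = - (/ C * K (p u))).
    { unfold Aarg. rewrite Ev. assert (H := HF u). unfold Rdiv in *. lra. }
    rewrite EA, Rabs_Ropp, Rabs_mult, (Rabs_right (/ C)) by (left; apply Rinv_0_lt_compat; lra).
    assert (H := HKb (p u)).
    apply Rle_trans with ((4 * a) * (PI * (4 / a ^ 3))).
    { apply Rmult_le_compat; auto. left; apply Rinv_0_lt_compat; lra. apply Rabs_pos. }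
    replace (4 * a * (PI * (4 / a ^ 3))) with (16 * PI * (/ a) ^ 2) by (field; lra).
    assert ((/ a)^2 <= 1/64) by nra. nra. }
  destruct (cosh_sinh_bound _ HA) as [Hch Hsh].
  assert (HGb : Rabs (Gp a t p u) <= / a).
  { unfold Gp. rewrite Hdsgn. fold C.
    assert (Hb := sqrtP_bounds a t (cos (p u)) Ha2 (COS_bound _)).
    assert (Hx := COS_bound (p u)).
    assert (HX : 0 <= cos (p u)^2 <= 1) by (split; nra).
    assert (Hc64 : cos (2 * t) <= 1) by (assert (64 <= a^2) by nra; nra).
    assert (HC1 : C^2 <= 1) by nra.
    unfold Rdiv. rewrite Rabs_mult, Rabs_inv.
    rewrite (Rabs_right (a - - sqrt (Pp a t (cos (p u))))) by lra.
    rewrite <- (Rmult_1_l (/ a)).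
    apply Rmult_le_compat; [apply Rabs_pos| left; apply Rinv_0_lt_compat; lra| |].
    - apply Rabs_le_between. split; nra.
    - apply Rinv_le_contravar; lra. }
  assert (Hcos := COS_bound (p u)). assert (Hsin := SIN_bound (p u)).
  assert (Hcos' : Rabs (cos (p u)) <= 1) by (apply Rabs_le_between; lra).
  assert (Hsin' : Rabs (sin (p u)) <= 1) by (apply Rabs_le_between; lra).
  assert (HCb : Rabs C <= / a / 2).
  { rewrite Rabs_right by lra. replace (/ a / 2) with (1 / (2 * a)) by (field; lra). exact HCu. }
  assert (HCC : Rabs (C ^ 2 / a) <= / a * / a).
  { rewrite Rabs_right by (apply Rle_ge; unfold Rdiv; apply Rmult_le_pos; nra).
    unfold Rdiv. apply Rmult_le_compat_r; [lra|].
    assert (HCi : C <= / a / 2) by (rewrite Rabs_right in HCb; lra). nra. }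
  assert (Hinva : Rabs (/ a) <= / a) by (rewrite Rabs_right; lra).
  assert (Hinva' : Rabs (1 / a) <= / a) by (unfold Rdiv; rewrite Rmult_1_l, Rabs_right; lra).
  unfold X1, X3. rewrite Hx2. fold t C.
  set (A := Aarg a (beta a) u v) in *.
  set (g := Gp a t p u) in *.
  set (ia := / a) in *.
  assert (T1 : Rabs (g / a * cos (p u) * sinh A) <= ia * ia * 1 * 3).
  { unfold Rdiv at 1. fold ia.
    apply abs_prod_le; [apply abs_prod_le; [apply abs_prod_le|]|]; auto. }
  assert (T2 : Rabs (C / a * sin (p u) * cosh A) <= ia / 2 * ia * 1 * 3).
  { unfold Rdiv at 1. fold ia.
    apply abs_prod_le; [apply abs_prod_le; [apply abs_prod_le|]|]; auto. }
  assert (Hg1 : Rabs (g / a - 1) <= ia * ia + 1).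
  { unfold Rdiv; fold ia. eapply Rle_trans; [apply abs_minus_le|].
    rewrite Rabs_R1. apply Rplus_le_compat_r. apply abs_prod_le; auto. }
  assert (T3 : Rabs (C / a * (g / a - 1) * cos (p u) * cosh A) <= ia / 2 * ia * (ia * ia + 1) * 1 * 3).
  { unfold Rdiv at 1. fold ia.
    apply abs_prod_le; [apply abs_prod_le; [apply abs_prod_le; [apply abs_prod_le|]|]|]; auto. }
  assert (Hg2 : Rabs (C ^ 2 / a + g) <= ia * ia + ia).
  { eapply Rle_trans; [apply Rabs_triang|]. lra. }
  assert (T4 : Rabs (1 / a * (C ^ 2 / a + g) * sin (p u) * sinh A) <= ia * (ia * ia + ia) * 1 * 3).
  { apply abs_prod_le; [apply abs_prod_le; [apply abs_prod_le|]|]; auto. }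
  assert (T0 : - (Gp a t p u / a * cos (p u) * sinh A - C / a * sin (p u) * cosh A) * 0 / 2 = 0) by (unfold Rdiv; ring).
  replace (- (X1 a t p (beta a) (G a) u v * 0) / 2) with 0 by (unfold Rdiv; ring).
  rewrite Rplus_0_l.
  assert (B1 := abs_minus_le (g / a * cos (p u) * sinh A) (C / a * sin (p u) * cosh A)).
  assert (B2 := abs_minus_le (C / a * (g / a - 1) * cos (p u) * cosh A)
                  (1 / a * (C ^ 2 / a + g) * sin (p u) * sinh A)).
  assert (Hiae : 14 * ia < eps).
  { unfold ia. apply (Rmult_lt_reg_l a); [lra|].
    replace (a * (14 * / a)) with 14 by (field; lra).
    apply (Rmult_lt_compat_r eps) in Hae; [|lra].
    replace (14 / eps * eps) with 14 in Hae by (field; lra). lra. }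
  assert (Hq : ia * ia <= ia / 8) by nra.
  assert (Hq2 : ia * ia * ia <= ia * ia / 8) by nra.
  assert (Hq3 : ia * ia * (ia * ia) <= ia * ia / 64) by nra.
  nra.
Qed.
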